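(* Let $k\ge2$, $\sigma_i=\frac{i(k-i)}2$, and let $\boldsymbol\xi(\tau)=(\xi_1,\dots,\xi_k)(\tau)$, $\tau\in[0,\tau_\infty)$, be a solution of the system $\dot\xi_i=b_i-b_{i+1}$ ($i=1,\dots,k$), where $b_1=b_{k+1}=0$ and $b_i=\sigma_{i-1}(e^{-(\xi_i-\xi_{i-1})}-1)$ for $i=2,\dots,k$, with $\sum_{i=1}^k\xi_i(0)=0$ and $\boldsymbol\xi(\tau)\ne0$ for all $\tau\in[0,\tau_\infty)$. Let $B(\tau)=\max_{1\le i\le k+1}b_i(\tau)$ and $J(\tau)=\{i\in\{1,\dots,k+1\}: b_i(\tau)=B(\tau)\}$. Then for every $\tau_0\in[0,\tau_\infty)$ there exists $\varepsilon>0$ such that for all $i\in J(\tau_0)\cap\{2,\dots,k\}$ and all $t\in(\tau_0,\tau_0+\varepsilon)$, $b_i(t)<B(\tau_0)$. *)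

(* Defs.v *)
From Stdlib Require Import Reals Lra Lia.
From Coquelicot Require Import Coquelicot.
Open Scope R_scope.

Definition sigma (k i : nat) : R := INR i * (INR k - INR i) / 2.

Definition bcoef (k : nat) (xi : nat -> R -> R) (i : nat) (t : R) : R :=
  if Nat.eqb i 1 then 0
  else if Nat.eqb i (S k) then 0
  else sigma k (i - 1) * (exp (- (xi i t - xi (i - 1)%nat t)) - 1).

(* maxf f n = max (f 1, f 2, ..., f (n+1)) *)
Fixpoint maxf (f : nat -> R) (n : nat) : R :=
  match n with
  | O => f 1%nat
  | S m => Rmax (maxf f m) (f (S (S m)))
  end.

Definition Bmax (k : nat) (xi : nat -> R -> R) (t : R) : R :=
  maxf (fun i => bcoef k xi i t) k.

Definition in_dom (tinf : Rbar) (t : R) : Prop := 0 <= t /\ Rbar_lt t tinf.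

(* f has derivative f' at every point of [0, tinf), the derivative being
   taken within the interval (one-sided at the endpoint 0). *)
Definition deriv_on (tinf : Rbar) (f f' : R -> R) : Prop :=
  forall t, in_dom tinf t ->
    filterlim (fun s => (f s - f t) / (s - t))
      (within (fun s => in_dom tinf s /\ s <> t) (locally t))
      (locally (f' t)).

Definition is_solution (k : nat) (tinf : Rbar) (xi : nat -> R -> R) : Prop :=
  forall i, (1 <= i <= k)%nat ->
    deriv_on tinf (xi i) (fun t => bcoef k xi i t - bcoef k xi (S i) t).

(* Main.v *)
Require Import Defs.
From Stdlib Require Import Reals Lra Lia FunctionalExtensionality Classical.
From Coquelicot Require Import Coquelicot.
Open Scope R_scope.

Definition clamp (a b s : R) : R := Rmax a (Rmin b s).

Lemma clamp_id a b s : a <= s <= b -> clamp a b s = s.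
Proof. intros. unfold clamp, Rmax, Rmin. repeat destruct Rle_dec; lra. Qed.

Lemma clamp_in a b s : a <= b -> a <= clamp a b s <= b.
Proof. intros. unfold clamp, Rmax, Rmin. repeat destruct Rle_dec; lra. Qed.

Lemma clamp_lip a b s x : Rabs (clamp a b s - clamp a b x) <= Rabs (s - x).
Proof. unfold clamp, Rmax, Rmin. repeat destruct Rle_dec;
  unfold Rabs; repeat destruct Rcase_abs; lra. Qed.

Lemma in_dom_conv tinf a b s : in_dom tinf a -> in_dom tinf b -> a <= s <= b -> in_dom tinf s.
Proof. intros [Ha1 Ha2] [Hb1 Hb2] Hs. split. lra.
  apply Rbar_le_lt_trans with (Finite b); [simpl; lra | exact Hb2]. Qed.

Lemma deriv_eps tinf f f' t : deriv_on tinf f f' -> in_dom tinf t ->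
  forall e, 0 < e -> exists d, 0 < d /\ forall s, Rabs (s - t) < d -> in_dom tinf s -> s <> t ->
   Rabs ((f s - f t) / (s - t) - f' t) < e.
Proof.
  intros H Ht e He. specialize (H t Ht (ball (f' t) e)).
  destruct (H (locally_ball (f' t) (mkposreal e He))) as [d Hd].
  exists d. split. apply cond_pos. intros s Hs H1 H2. apply (Hd s). exact Hs. split; auto.
Qed.

Lemma deriv_clamp tinf f f' a b t : deriv_on tinf f f' -> in_dom tinf a -> in_dom tinf b ->
  a < t < b -> derivable_pt_lim (fun s => f (clamp a b s)) t (f' t).
Proof.
  intros H Ha Hb Ht eps Heps.
  assert (Htd : in_dom tinf t) by (apply (in_dom_conv tinf a b); auto; lra).
  destruct (deriv_eps _ _ _ _ H Htd eps Heps) as [d [Hd Hd2]].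
  assert (Hp : 0 < Rmin d (Rmin (t - a) (b - t))).
  { repeat apply Rmin_pos; lra. }
  exists (mkposreal _ Hp). intros h Hh Hh2. simpl in Hh2.
  assert (H1 := Rmin_l d (Rmin (t - a) (b - t))).
  assert (H2 := Rmin_r d (Rmin (t - a) (b - t))).
  assert (H3 := Rmin_l (t - a) (b - t)).
  assert (H4 := Rmin_r (t - a) (b - t)).
  assert (Hha : Rabs h < t - a) by lra.
  assert (Hhb : Rabs h < b - t) by lra.
  apply Rabs_def2 in Hha. apply Rabs_def2 in Hhb.
  rewrite (clamp_id a b (t+h)) by lra. rewrite (clamp_id a b t) by lra.
  replace h with ((t + h) - t) at 2 by ring.
  apply Hd2.
  - replace (t + h - t) with h by ring. lra.
  - apply (in_dom_conv tinf a b); auto; lra.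
  - intro E. apply Hh. lra.
Qed.

Lemma cont_clamp tinf f f' a b x : deriv_on tinf f f' -> in_dom tinf a -> in_dom tinf b ->
  a <= b -> continuity_pt (fun s => f (clamp a b s)) x.
Proof.
  intros H Ha Hb Hab.
  set (y := clamp a b x).
  assert (Hy : a <= y <= b) by (apply clamp_in; auto).
  assert (Hyd : in_dom tinf y) by (apply (in_dom_conv tinf a b); auto).
  destruct (deriv_eps _ _ _ _ H Hyd 1 Rlt_0_1) as [d [Hd Hd2]].
  intros eps Heps.
  set (M := Rabs (f' y) + 1).
  assert (HM : 0 < M) by (unfold M; pose proof (Rabs_pos (f' y)); lra).
  exists (Rmin d (eps / M)). split.
  { apply Rmin_pos; auto. apply Rdiv_lt_0_compat; auto. }
  intros s [_ Hs]. simpl in *. unfold R_dist in *. fold y.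
  assert (Hl := clamp_lip a b s x). fold y in Hl.
  set (z := clamp a b s) in *.
  assert (Hz : a <= z <= b) by (apply clamp_in; auto).
  assert (H1 := Rmin_l d (eps / M)).
  assert (H2 := Rmin_r d (eps / M)).
  destruct (Req_dec z y) as [E|E].
  { rewrite E. replace (f y - f y) with 0 by ring. rewrite Rabs_R0. auto. }
  assert (Hq := Hd2 z ltac:(lra) ltac:(apply (in_dom_conv tinf a b); auto) E).
  assert (Hzy : z - y <> 0) by lra.
  replace (f z - f y) with (((f z - f y) / (z - y)) * (z - y)) by (field; auto).
  rewrite Rabs_mult.
  assert (Hq2 : Rabs ((f z - f y) / (z - y)) <= M).
  { unfold M. pose proof (Rabs_triang_inv ((f z - f y) / (z - y)) (f' y)). lra. }
  assert (Hzz : Rabs (z - y) < eps / M) by lra.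
  apply Rle_lt_trans with (M * Rabs (z - y)).
  apply Rmult_le_compat_r; auto. apply Rabs_pos.
  apply Rlt_le_trans with (M * (eps / M)). apply Rmult_lt_compat_l; auto.
  right. field. lra.
Qed.
Lemma cont_expr (c : R) (f g : R -> R) x : continuity_pt f x -> continuity_pt g x ->
  continuity_pt (fun s => c * (exp (- (f s - g s)) - 1)) x.
Proof.
  intros Hf Hg.
  change (continuity_pt (mult_real_fct c ((comp exp (opp_fct (f - g)%F)) - fct_cte 1)%F) x).
  apply continuity_pt_scal. apply continuity_pt_minus. 2: apply continuity_pt_const; intros ? ?; reflexivity.
  apply continuity_pt_comp. apply continuity_pt_opp. apply continuity_pt_minus; auto.
  apply derivable_continuous_pt. apply derivable_pt_exp.
Qed.

Lemma deriv_expr (c : R) (f g : R -> R) x df dg : derivable_pt_lim f x df -> derivable_pt_lim g x dg ->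
  derivable_pt_lim (fun s => c * (exp (- (f s - g s)) - 1)) x (- (c * exp (- (f x - g x))) * (df - dg)).
Proof.
  intros Hf Hg. apply is_derive_Reals in Hf. apply is_derive_Reals in Hg.
  apply is_derive_Reals.
  auto_derive. split. exists df; auto. split. exists dg; auto. auto.
  change (fun x0 : R => f x0) with f; change (fun x0 : R => g x0) with g.
  rewrite (is_derive_unique _ _ _ Hf), (is_derive_unique _ _ _ Hg). unfold Rminus. ring.
Qed.

Lemma left_min_deriv f t l a : a < t -> (forall s, a <= s <= t -> f t <= f s) ->
  derivable_pt_lim f t l -> l <= 0.
Proof.
  intros Hat Hm Hd. destruct (Rle_or_lt l 0) as [H|H]; auto. exfalso.
  destruct (Hd l H) as [d Hd2].
  set (h := - (Rmin d (t - a)) / 2).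
  assert (Hp : 0 < Rmin d (t - a)) by (apply Rmin_pos; [apply cond_pos | lra]).
  assert (H1 := Rmin_l d (t - a)). assert (H2 := Rmin_r d (t - a)).
  assert (Hh0 : h < 0) by (unfold h; lra).
  assert (Hq := Hd2 h ltac:(lra) ltac:(rewrite Rabs_left; unfold h; lra)).
  assert (Hn : 0 <= f (t + h) - f t) by (assert (Hx := Hm (t + h) ltac:(unfold h; lra)); lra).
  assert (Hi : / h < 0) by (apply Rinv_lt_0_compat; auto).
  assert (Hq0 : (f (t + h) - f t) / h <= 0) by (unfold Rdiv; nra).
  apply Rabs_def2 in Hq. lra.
Qed.

Lemma left_max_deriv f t l a : a < t -> (forall s, a <= s <= t -> f s <= f t) ->
  derivable_pt_lim f t l -> 0 <= l.
Proof.
  intros Hat Hm Hd.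
  assert (- l <= 0).
  { apply (left_min_deriv (fun s => - f s) t (- l) a Hat).
    intros s Hs. specialize (Hm s Hs). lra.
    apply (derivable_pt_lim_opp f t l Hd). }
  lra.
Qed.
Lemma maxf_ge f n m : (1 <= m <= S n)%nat -> f m <= maxf f n.
Proof.
  induction n; intros Hm; simpl.
  - replace m with 1%nat by lia. lra.
  - destruct (Nat.eq_dec m (S (S n))) as [E|E].
    + subst. apply Rmax_r.
    + eapply Rle_trans. apply IHn. lia. apply Rmax_l.
Qed.

Lemma bcoef_1 k xi t : bcoef k xi 1 t = 0.
Proof. reflexivity. Qed.

Lemma bcoef_Sk k xi t : (1 <= k)%nat -> bcoef k xi (S k) t = 0.
Proof. intros. unfold bcoef. rewrite (proj2 (Nat.eqb_neq (S k) 1)) by lia.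
  rewrite Nat.eqb_refl. reflexivity. Qed.

Lemma bcoef_mid k xi j t : (2 <= j <= k)%nat ->
  bcoef k xi j t = Defs.sigma k (j - 1)%nat * (exp (- (xi j t - xi (j - 1)%nat t)) - 1).
Proof. intros. unfold bcoef. rewrite (proj2 (Nat.eqb_neq j 1)) by lia.
  rewrite (proj2 (Nat.eqb_neq j (S k))) by lia. reflexivity. Qed.

Lemma sigma_pos k i : (1 <= i < k)%nat -> 0 < Defs.sigma k i.
Proof. intros. unfold Defs.sigma. assert (0 < INR i) by (apply lt_0_INR; lia).
  assert (INR i < INR k) by (apply lt_INR; lia). apply Rdiv_lt_0_compat; nra. Qed.

Lemma sum_deriv (F : nat -> R -> R) dF n t :
  (forall j, (j <= n)%nat -> derivable_pt_lim (F j) t (dF j)) ->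
  derivable_pt_lim (fun s => sum_f_R0 (fun j => F j s) n) t (sum_f_R0 dF n).
Proof.
  induction n; intros H; simpl.
  - apply H. lia.
  - apply is_derive_Reals.
    apply (is_derive_plus (fun s => sum_f_R0 (fun j => F j s) n) (fun s => F (S n) s)).
    apply is_derive_Reals. apply IHn. intros. apply H. lia.
    apply is_derive_Reals. apply H. lia.
Qed.

Lemma sum_cont (F : nat -> R -> R) n t :
  (forall j, (j <= n)%nat -> continuity_pt (F j) t) ->
  continuity_pt (fun s => sum_f_R0 (fun j => F j s) n) t.
Proof.
  induction n; intros H; simpl.
  - apply H. lia.
  - change (continuity_pt ((fun s => sum_f_R0 (fun j => F j s) n) + F (S n))%F t).
    apply continuity_pt_plus. apply IHn. intros. apply H. lia. apply H. lia.
Qed.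

Lemma telesc (g : nat -> R) n : sum_f_R0 (fun j => g (S j) - g (S (S j))) n = g 1%nat - g (S (S n)).
Proof. induction n; simpl. ring. rewrite IHn. ring. Qed.

Lemma evt_family (P : nat -> R -> R) a b lo hi : a <= b ->
  (forall j x, (lo <= j <= hi)%nat -> a <= x <= b -> continuity_pt (P j) x) ->
  forall d, (lo + d <= hi)%nat -> exists j t, (lo <= j <= lo + d)%nat /\ a <= t <= b /\
    forall j' s, (lo <= j' <= lo + d)%nat -> a <= s <= b -> P j t <= P j' s.
Proof.
  intros Hab Hc. induction d; intros Hd.
  - destruct (continuity_ab_min (P lo) a b Hab) as [m [Hm1 Hm2]].
    { intros. apply Hc; auto; lia. }
    exists lo, m. split. lia. split. auto. intros j' s Hj Hs.
    replace j' with lo by lia. auto.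
  - destruct IHd as [j [t [Hj [Ht Hmin]]]]. lia.
    destruct (continuity_ab_min (P (lo + S d)%nat) a b Hab) as [m [Hm1 Hm2]].
    { intros. apply Hc; auto; lia. }
    destruct (Rle_or_lt (P j t) (P (lo + S d)%nat m)) as [H|H].
    + exists j, t. split. lia. split. auto. intros j' s Hj' Hs.
      destruct (Nat.eq_dec j' (lo + S d)) as [E|E].
      * subst. eapply Rle_trans. apply H. auto.
      * apply Hmin; auto. lia.
    + exists (lo + S d)%nat, m. split. lia. split. auto. intros j' s Hj' Hs.
      destruct (Nat.eq_dec j' (lo + S d)) as [E|E].
      * subst. auto.
      * eapply Rle_trans. left. apply H. apply Hmin; auto. lia.
Qed.
Lemma bc_clamp_eq k xi a b n t : a <= t <= b ->
  bcoef k (fun i s => xi i (clamp a b s)) n t = bcoef k xi n t.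
Proof. intros H. change (bcoef k xi n (clamp a b t) = bcoef k xi n t). rewrite clamp_id; auto. Qed.

Lemma bc_cont k tinf xi a b j x : (2 <= k)%nat -> is_solution k tinf xi ->
  in_dom tinf a -> in_dom tinf b -> a <= b -> (1 <= j <= S k)%nat ->
  continuity_pt (fun s => bcoef k (fun i s => xi i (clamp a b s)) j s) x.
Proof.
  intros Hk Hsol Ha Hb Hab Hj.
  destruct (Nat.eq_dec j 1) as [E|E].
  { subst. apply continuity_pt_ext with (fun _ => 0). intros; rewrite bcoef_1; auto.
    apply continuity_pt_const. intros ? ?; reflexivity. }
  destruct (Nat.eq_dec j (S k)) as [E2|E2].
  { subst. apply continuity_pt_ext with (fun _ => 0). intros; rewrite bcoef_Sk; auto; lia.
    apply continuity_pt_const. intros ? ?; reflexivity. }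
  apply continuity_pt_ext with (fun s => Defs.sigma k (j - 1)%nat *
     (exp (- (xi j (clamp a b s) - xi (j - 1)%nat (clamp a b s))) - 1)).
  { intros s. rewrite bcoef_mid by lia. reflexivity. }
  apply cont_expr.
  - apply (cont_clamp tinf _ _ a b x (Hsol j ltac:(lia))); auto.
  - apply (cont_clamp tinf _ _ a b x (Hsol (j - 1)%nat ltac:(lia))); auto.
Qed.

Lemma bc_deriv k tinf xi a b j t : (2 <= k)%nat -> is_solution k tinf xi ->
  in_dom tinf a -> in_dom tinf b -> a < t < b -> (2 <= j <= k)%nat ->
  derivable_pt_lim (fun s => bcoef k (fun i s => xi i (clamp a b s)) j s) t
   (- (Defs.sigma k (j - 1)%nat * exp (- (xi j t - xi (j - 1)%nat t))) *
     (2 * bcoef k (fun i s => xi i (clamp a b s)) j t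
        - bcoef k (fun i s => xi i (clamp a b s)) (S j) t
        - bcoef k (fun i s => xi i (clamp a b s)) (j - 1)%nat t)).
Proof.
  intros Hk Hsol Ha Hb Ht Hj.
  rewrite !(bc_clamp_eq k xi a b) by lra.
  apply derivable_pt_lim_ext with (fun s => Defs.sigma k (j - 1)%nat *
     (exp (- (xi j (clamp a b s) - xi (j - 1)%nat (clamp a b s))) - 1)).
  { intros s. rewrite bcoef_mid by lia. reflexivity. }
  assert (H1 := deriv_clamp tinf _ _ a b t (Hsol j ltac:(lia)) Ha Hb Ht).
  assert (H2 := deriv_clamp tinf _ _ a b t (Hsol (j - 1)%nat ltac:(lia)) Ha Hb Ht).
  simpl in H1, H2. replace (S (j - 1)) with j in H2 by lia.
  assert (H3 := deriv_expr (Defs.sigma k (j - 1)%nat) _ _ t _ _ H1 H2).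
  cbv beta in H3. rewrite !(clamp_id a b t) in H3 by lra.
  match goal with |- derivable_pt_lim _ _ ?l => replace l with
   (- (Defs.sigma k (j - 1) * exp (- (xi j t - xi (j - 1)%nat t))) *
       (bcoef k xi j t - bcoef k xi (S j) t - (bcoef k xi (j - 1)%nat t - bcoef k xi j t))) by ring end.
  exact H3.
Qed.

Lemma P_cont (h : R -> R) c1 c2 c3 x : continuity_pt h x ->
  continuity_pt (fun y => c1 - h y + c2 * (y - c3)) x.
Proof.
  intros H. change (continuity_pt ((fct_cte c1 - h) + mult_real_fct c2 (id - fct_cte c3))%F x).
  apply continuity_pt_plus. apply continuity_pt_minus; auto.
  apply continuity_pt_const. intros ? ?; reflexivity.
  apply continuity_pt_scal. apply continuity_pt_minus. apply derivable_continuous_pt, derivable_pt_id.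
  apply continuity_pt_const. intros ? ?; reflexivity.
Qed.

Lemma P_deriv (h : R -> R) c1 c2 c3 x D : derivable_pt_lim h x D ->
  derivable_pt_lim (fun y => c1 - h y + c2 * (y - c3)) x (- D + c2).
Proof.
  intros H. apply is_derive_Reals in H. apply is_derive_Reals.
  auto_derive. exists D; auto.
  change (fun x0 : R => h x0) with h. rewrite (is_derive_unique _ _ _ H). ring.
Qed.

Lemma sum_const_eq (f : nat -> R) c n : (forall j, (j <= n)%nat -> f j = c) ->
  sum_f_R0 f n = c * INR (S n).
Proof. intros H. rewrite <- sum_cte. apply sum_eq. auto. Qed.

Theorem lemma2p2 (k : nat) (tinf : Rbar) (xi : nat -> R -> R) :
  (2 <= k)%nat ->
  is_solution k tinf xi ->
  sum_f_R0 (fun j => xi (S j) 0) (k - 1) = 0 ->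
  (forall t, in_dom tinf t -> exists i, (1 <= i <= k)%nat /\ xi i t <> 0) ->
  forall tau0, in_dom tinf tau0 ->
  exists eps, 0 < eps /\
    forall i, (2 <= i <= k)%nat ->
      bcoef k xi i tau0 = Bmax k xi tau0 ->
      forall t, tau0 < t < tau0 + eps ->
        bcoef k xi i t < Bmax k xi tau0.
Proof.
  intros Hk Hsol Hsum Hnz tau0 Hdom.
  set (B := Bmax k xi tau0).
  assert (HbB : forall m, (1 <= m <= S k)%nat -> bcoef k xi m tau0 <= B).
  { intros m Hm. unfold B, Bmax. apply (maxf_ge (fun i => bcoef k xi i tau0)). auto. }
  assert (HB0 : 0 <= B) by (rewrite <- (bcoef_1 k xi tau0); apply HbB; lia).
  assert (HT1 : exists T1, in_dom tinf T1 /\ tau0 < T1).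
  { destruct Hdom as [H0 Hlt]. destruct tinf as [r| |]; simpl in Hlt.
    - exists ((tau0 + r) / 2). split; [split; [lra | simpl; lra] | lra].
    - exists (tau0 + 1). split; [split; [lra | simpl; auto] | lra].
    - contradiction. }
  destruct HT1 as [T1 [HT1 HtT1]].
  (* conservation *)
  assert (Hcons : sum_f_R0 (fun j => xi (S j) tau0) (k - 1) = 0).
  { destruct (Req_dec tau0 0) as [E|E]. { rewrite E. exact Hsum. }
    assert (Htp : 0 < tau0) by (destruct Hdom; lra).
    assert (H0d : in_dom tinf 0).
    { destruct Hdom as [_ Hl]. split. lra. apply Rbar_le_lt_trans with (Finite tau0); simpl; auto; lra. }
    set (g := fun s => sum_f_R0 (fun j => xi (S j) (clamp 0 tau0 s)) (k - 1)).
    destruct (MVT_gen g 0 tau0 (fun _ => 0)) as [c [_ Hc]].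
    - intros x Hx. rewrite Rmin_left, Rmax_right in Hx by lra. apply is_derive_Reals.
      replace 0 with (sum_f_R0 (fun j => bcoef k xi (S j) x - bcoef k xi (S (S j)) x) (k - 1)).
      + apply (sum_deriv (fun j s => xi (S j) (clamp 0 tau0 s))). intros j Hj.
        apply (deriv_clamp tinf _ _ 0 tau0 x (Hsol (S j) ltac:(lia))); auto.
      + pose proof (telesc (fun j => bcoef k xi j x) (k - 1)) as Ht. cbv beta in Ht. rewrite Ht.
        replace (S (S (k - 1))) with (S k) by lia. rewrite bcoef_1, bcoef_Sk by lia. ring.
    - intros x Hx. apply sum_cont. intros j Hj.
      apply (cont_clamp tinf _ _ 0 tau0 x (Hsol (S j) ltac:(lia))); auto; lra.
    - unfold g in Hc. rewrite !clamp_id in Hc by lra. rewrite Hsum in Hc. lra. }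
  assert (Hm : exists m, (1 <= m <= S k)%nat /\ bcoef k xi m tau0 < B).
  { apply NNPP. intros Hn.
    assert (Heq : forall m, (1 <= m <= S k)%nat -> bcoef k xi m tau0 = B).
    { intros m Hm. apply Rle_antisym. apply HbB; auto. apply Rnot_lt_le. intros Hl. apply Hn. exists m; auto. }
    assert (HB : B = 0) by (rewrite <- (Heq 1%nat) by lia; apply bcoef_1).
    assert (Hst : forall m, (2 <= m <= k)%nat -> xi m tau0 = xi (m - 1)%nat tau0).
    { intros m Hm. specialize (Heq m ltac:(lia)). rewrite bcoef_mid in Heq by lia.
      rewrite HB in Heq. assert (Hs := sigma_pos k (m - 1) ltac:(lia)).
      assert (He : exp (- (xi m tau0 - xi (m - 1)%nat tau0)) = exp 0).
      { rewrite exp_0. apply Rmult_integral in Heq. destruct Heq as [H|H]; lra. }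
      apply exp_inv in He. lra. }
    assert (Hall : forall n, (n <= k - 1)%nat -> xi (S n) tau0 = xi 1%nat tau0).
    { induction n; intros Hn'. auto. rewrite Hst by lia. replace (S (S n) - 1)%nat with (S n) by lia.
      apply IHn. lia. }
    rewrite (sum_const_eq _ (xi 1%nat tau0)) in Hcons by auto.
    assert (Hx1 : xi 1%nat tau0 = 0).
    { assert (0 < INR (S (k - 1))) by (apply lt_0_INR; lia). nra. }
    destruct (Hnz tau0 Hdom) as [i [Hi Hxi]]. apply Hxi.
    replace i with (S (i - 1)) by lia. rewrite Hall by lia. auto. }
  destruct Hm as [m [Hm Hmlt]].
  assert (Hle : tau0 <= T1) by lra.
  set (bc := fun j s => bcoef k (fun i s => xi i (clamp tau0 T1 s)) j s).
  assert (Hbc0 : forall j, bc j tau0 = bcoef k xi j tau0).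
  { intros j. unfold bc. apply bc_clamp_eq. lra. }
  assert (Hbc1 : forall s, bc 1%nat s = 0) by (intros; apply bcoef_1).
  assert (HbcSk : forall s, bc (S k) s = 0) by (intros; apply bcoef_Sk; lia).
  assert (Hcm := bc_cont k tinf xi tau0 T1 m tau0 Hk Hsol Hdom HT1 Hle Hm).
  destruct (Hcm (B - bcoef k xi m tau0) ltac:(lra)) as [alp [Halp Hcm2]].
  exists (Rmin alp (T1 - tau0)). split. apply Rmin_pos; lra.
  intros i Hi HiB t Ht.
  assert (Ha1 := Rmin_l alp (T1 - tau0)). assert (Ha2 := Rmin_r alp (T1 - tau0)).
  assert (Hmt : bc m t < B).
  { assert (Hd := Hcm2 t). simpl in Hd. unfold R_dist, D_x, no_cond in Hd.
    change (bcoef k (fun i s => xi i (clamp tau0 T1 s)) m t) with (bc m t) in Hd.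
    change (bcoef k (fun i s => xi i (clamp tau0 T1 s)) m tau0) with (bc m tau0) in Hd.
    rewrite Hbc0 in Hd.
    assert (Hd2 : Rabs (bc m t - bcoef k xi m tau0) < B - bcoef k xi m tau0).
    { apply Hd. split. split. auto. lra. rewrite Rabs_right; lra. }
    apply Rabs_def2 in Hd2. lra. }
  replace (bcoef k xi i t) with (bc i t) by (unfold bc; apply bc_clamp_eq; lra).
  (* weak maximum principle *)
  assert (Hweak : forall s, tau0 <= s <= t -> forall j, (2 <= j <= k)%nat -> bc j s <= B).
  { intros s Hs j Hj. apply Rnot_lt_le. intros Hgt.
    assert (Hsp : tau0 < s).
    { destruct (Req_dec s tau0) as [E|E]; [|lra]. subst s. rewrite Hbc0 in Hgt.
      assert (HH := HbB j ltac:(lia)). lra. }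
    set (eta := (bc j s - B) / (s - tau0 + 1)).
    assert (Heta : 0 < eta) by (unfold eta; apply Rdiv_lt_0_compat; lra).
    assert (Heta2 : eta * (s - tau0 + 1) = bc j s - B) by (unfold eta; field; lra).
    set (P := fun j' x => B - bc j' x + eta * (x - tau0)).
    destruct (evt_family P tau0 s 2 k ltac:(lra)) with (d := (k - 2)%nat)
      as [js [ts [Hjs [Hts Hmin]]]].
    { intros j' x Hj' Hx. unfold P. apply P_cont. unfold bc. apply (bc_cont k tinf); auto; lia. }
    { lia. }
    replace (2 + (k - 2))%nat with k in Hjs, Hmin by lia.
    assert (HPneg : P js ts < 0).
    { eapply Rle_lt_trans. apply (Hmin j s); auto; lra. unfold P. nra. }
    assert (Htsp : tau0 < ts).
    { destruct (Req_dec ts tau0) as [E|E]; [|lra]. exfalso. rewrite E in HPneg. unfold P in HPneg.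
      rewrite Hbc0 in HPneg. assert (HH := HbB js ltac:(lia)). lra. }
    assert (Hd := bc_deriv k tinf xi tau0 T1 js ts Hk Hsol Hdom HT1 ltac:(lra) Hjs).
    fold bc in Hd.
    assert (HdP := P_deriv _ B eta tau0 ts _ Hd).
    assert (Hlm : forall s', tau0 <= s' <= ts -> P js ts <= P js s').
    { intros s' Hs'. apply Hmin; auto; lra. }
    assert (Hneg := left_min_deriv (P js) ts _ tau0 Htsp Hlm HdP).
    assert (Hc : 0 < Defs.sigma k (js - 1) * exp (- (xi js ts - xi (js - 1)%nat ts))).
    { apply Rmult_lt_0_compat. apply sigma_pos; lia. apply exp_pos. }
    assert (Hbig : B < bc js ts) by (unfold P in HPneg; nra).
    assert (H1 : bc (S js) ts <= bc js ts).
    { destruct (Nat.eq_dec js k) as [->|E]. rewrite HbcSk; lra.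
      assert (HH := Hmin (S js) ts ltac:(lia) Hts). unfold P in HH. lra. }
    assert (H2 : bc (js - 1)%nat ts <= bc js ts).
    { destruct (Nat.eq_dec js 2) as [->|E]. simpl. rewrite Hbc1; lra.
      assert (HH := Hmin (js - 1)%nat ts ltac:(lia) Hts). unfold P in HH. lra. }
    change (bcoef k (fun (i : nat) (s : R) => xi i (clamp tau0 T1 s))) with bc in Hneg.
    assert (HX : 0 <= Defs.sigma k (js - 1) * exp (- (xi js ts - xi (js - 1)%nat ts)) *
       (2 * bc js ts - bc (S js) ts - bc (js - 1)%nat ts)) by (apply Rmult_le_pos; lra).
    lra. }
  assert (Hweak' : forall s, tau0 <= s <= t -> forall j, (1 <= j <= S k)%nat -> bc j s <= B).
  { intros s Hs j Hj. destruct (Nat.eq_dec j 1) as [->|E]. rewrite Hbc1; auto.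
    destruct (Nat.eq_dec j (S k)) as [->|E2]. rewrite HbcSk; auto. apply Hweak; auto; lia. }
  assert (Hprop : forall j, (2 <= j <= k)%nat -> bc j t = B -> bc (S j) t = B /\ bc (j - 1)%nat t = B).
  { intros j Hj Hjt.
    assert (Hd := bc_deriv k tinf xi tau0 T1 j t Hk Hsol Hdom HT1 ltac:(lra) Hj).
    fold bc in Hd. 
    assert (Hlm : forall s, tau0 <= s <= t -> bc j s <= bc j t).
    { intros s Hs. rewrite Hjt. apply Hweak; auto. }
    assert (Hpos := left_max_deriv (bc j) t _ tau0 ltac:(lra) Hlm Hd).
    assert (Hc : 0 < Defs.sigma k (j - 1) * exp (- (xi j t - xi (j - 1)%nat t))).
    { apply Rmult_lt_0_compat. apply sigma_pos; lia. apply exp_pos. }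
    assert (H1 := Hweak' t ltac:(lra) (S j) ltac:(lia)).
    assert (H2 := Hweak' t ltac:(lra) (j - 1)%nat ltac:(lia)).
    unfold bc in Hjt, H1, H2 |- *. rewrite Hjt in Hpos.
    split; nra. }
  apply Rnot_le_lt. intros Hge.
  assert (HiB' : bc i t = B) by (apply Rle_antisym; [apply Hweak; auto; lra | auto]).
  assert (Hup : forall n, (i + n <= S k)%nat -> bc (i + n)%nat t = B).
  { induction n; intros Hn. rewrite Nat.add_0_r. auto.
    replace (i + S n)%nat with (S (i + n)) by lia. apply Hprop. lia. apply IHn. lia. }
  assert (Hdn : forall n, (n <= i - 1)%nat -> bc (i - n)%nat t = B).
  { induction n; intros Hn. rewrite Nat.sub_0_r. auto.
    replace (i - S n)%nat with (i - n - 1)%nat by lia. apply Hprop. lia. apply IHn. lia. }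
  destruct (Nat.le_gt_cases i m) as [Hl|Hl].
  - assert (Hb := Hup (m - i)%nat ltac:(lia)). replace (i + (m - i))%nat with m in Hb by lia. lra.
  - assert (Hb := Hdn (i - m)%nat ltac:(lia)). replace (i - (i - m))%nat with m in Hb by lia. lra.
Qed.
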